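(* Let $n,T,p\ge 1$, let $\alpha\in(0,\tfrac12)$, $\pi>1$, $c>0$, and let $\bar c\ge \underline{c}>0$ and $c_m>0$ be constants. Suppose the covariate vectors $X^{zt}\in[0,1]^p$ ($z\in[n]$, $t\in[T]$) satisfy the following coverage condition: for every pair $x^{(1)}\le x^{(2)}$ in $[0,1]^p$ (componentwise), with $V:=\prod_{j=1}^p (x^{(2)}_j-x^{(1)}_j)$ and $M:=\sqrt{\frac{\ln(nT)(p+1)}{\min(n,T)}}$, $$\underline{c}\,V-c_mM\;\le\;\frac{\#\{(z,t): x^{(1)}\le X^{zt}\le x^{(2)}\}}{nT}\;\le\;\bar c\,V+c_mM .$$ Let $\mathbb T$ be an $\alpha$-regular, fair-split regression tree (with parameter $\pi$) on the $nT$ observations, with $\ell$ leaves, each of depth at least $c\log \ell$, and suppose $\ell\le \left(\frac{\alpha}{2c_mM}\right)^{\frac{1}{c\log(1/\alpha)}}$. Let $\mathcal T_1^\star,\dots,\mathcal T_q^\star:[0,1]^p\to\mathbb R$ be Lipschitz functions, $\mathcal T_i^\star$ having Lipschitz constant $L_i$. Then for each $i\in[q]$ and each leaf of $\mathbb T$, letting $C$ be the set of observations in that leaf, $$\max_{(z_1,t_1),(z_2,t_2)\in C}\left|\mathcal T_i^\star(X^{z_1t_1})-\mathcal T_i^\star(X^{z_2t_2})\right|\le \frac{2L_i\sqrt p}{\ell^{s}},\qquad s:=\frac{c}{(\pi+1)p}\cdot\frac{\alpha\,\underline{c}}{4\bar c}.$$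
   Context: Panel data: $n$ units observed over $T$ time periods; observation $(z,t)$ has covariate vector $X^{zt}=(X_{1zt},\dots,X_{pzt})\in[0,1]^p$. There are $q$ treatments encoded by binary matrices $W_1,\dots,W_q\in\{0,1\}^{n\times T}$ (entry $(z,t)$ is 1 if observation $(z,t)$ receives the treatment); $\mathcal T_i^\star(X^{zt})$ is the effect of treatment $i$ on observation $(z,t)$. A regression tree here is a binary tree whose root contains all $nT$ observations and each internal node splits its set of observations into two children by comparing a single covariate $j$ to a threshold $x$ (observations with $X_{jzt}\le x$ versus $X_{jzt}>x$); the leaves partition the observations into clusters. The tree is $\alpha$-regular if every split sends at least a fraction $\alpha$ of the node's observations to each child, and each child contains at least one treated observation. The tree is a fair-split tree (with parameter $\pi>1$) if, for any node, whenever a covariate $j$ has not been used in the splits of its last $\pi p$ ancestor nodes, the next split at that node must use covariate $j$ (ties between several such covariates broken arbitrarily). Lipschitz is with respect to the Euclidean norm. *)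

(* Defs.v *)
From HB Require Import structures.
From mathcomp Require Import all_boot all_order all_algebra.
From mathcomp Require Import all_classical all_reals all_analysis.
Set Implicit Arguments. Unset Strict Implicit. Unset Printing Implicit Defensive.
Import Order.TTheory GRing.Theory Num.Theory.
Local Open Scope ring_scope.

(* A regression tree: a leaf, or an internal node splitting on covariate j at
   threshold x (left child: X_j <= x, right child: X_j > x). *)
Inductive tree (R : Type) (p : nat) :=
  | Leaf
  | Node of 'I_p & R & tree R p & tree R p.
Arguments Leaf {R p}.

Section Trees.
Variables (R : realType) (n T p q : nat).
Variable X : 'I_n -> 'I_T -> 'I_p -> R.
Variable W : 'I_q -> 'I_n -> 'I_T -> bool.

Definition obs := ('I_n * 'I_T)%type.

Definition left_set (S : {set obs}) (j : 'I_p) (x : R) : {set obs} :=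
  [set o in S | X o.1 o.2 j <= x].
Definition right_set (S : {set obs}) (j : 'I_p) (x : R) : {set obs} :=
  [set o in S | x < X o.1 o.2 j].

Fixpoint leaves (t : tree R p) (S : {set obs}) (d : nat) : seq ({set obs} * nat) :=
  match t with
  | Leaf => [:: (S, d)]
  | Node j x l r => leaves l (left_set S j x) d.+1 ++ leaves r (right_set S j x) d.+1
  end.

Definition treated (o : obs) : Prop := exists i : 'I_q, W i o.1 o.2 = true.

Fixpoint regular (alpha : R) (t : tree R p) (S : {set obs}) : Prop :=
  match t with
  | Leaf => True
  | Node j x l r =>
      [/\ alpha * #|S|%:R <= #|left_set S j x|%:R,
          alpha * #|S|%:R <= #|right_set S j x|%:R,
          (exists o, o \in left_set S j x /\ treated o) &
          (exists o, o \in right_set S j x /\ treated o)] /\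
      regular alpha l (left_set S j x) /\
      regular alpha r (right_set S j x)
  end.

(* hist = covariates used in the splits of the ancestors, most recent (parent) first.
   Covariate k is unused in the last pi*p ancestors. *)
Definition unused_recent (pi : R) (hist : seq 'I_p) (k : 'I_p) : Prop :=
  forall i : nat, (i < size hist)%N -> (i.+1)%:R <= pi * p%:R -> nth k hist i != k.

Fixpoint fair_split (pi : R) (t : tree R p) (hist : seq 'I_p) : Prop :=
  match t with
  | Leaf => True
  | Node j x l r =>
      [/\ (pi * p%:R <= (size hist)%:R ->
             (exists k, unused_recent pi hist k) -> unused_recent pi hist j),
          fair_split pi l (j :: hist) &
          fair_split pi r (j :: hist)]
  end.

End Trees.

(* Main.v *)
Require Import Defs.
From HB Require Import structures.
From mathcomp Require Import all_boot all_order all_algebra.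
From mathcomp Require Import all_classical all_reals all_analysis.
From mathcomp Require Import lra ring zify.
Import Order.TTheory GRing.Theory Num.Theory.
Local Open Scope ring_scope.
Set Implicit Arguments. Unset Strict Implicit.

Section Geo.
Variables (R : realType) (n T p : nat) (X : 'I_n -> 'I_T -> 'I_p -> R).
Hypothesis HX : forall z tt j, 0 <= X z tt j <= 1.

Definition xv (o : ('I_n * 'I_T)%type) k := X o.1 o.2 k.
Definition lo (S : {set ('I_n * 'I_T)}) k := \big[Order.min/1]_(o in S) xv o k.
Definition hi (S : {set ('I_n * 'I_T)}) k := \big[Order.max/0]_(o in S) xv o k.
Definition wd S k := hi S k - lo S k.
Definition bconv (S : {set ('I_n * 'I_T)}) := forall o,
  (forall k, exists2 o1, o1 \in S & xv o1 k <= xv o k) ->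
  (forall k, exists2 o2, o2 \in S & xv o k <= xv o2 k) -> o \in S.

Lemma xv01 o k : 0 <= xv o k <= 1. Proof. exact: HX. Qed.

Lemma lo_le (S : {set ('I_n * 'I_T)}) o k : o \in S -> lo S k <= xv o k.
Proof. move=> oS; exact: (bigmin_le_cond _ _ oS). Qed.
Lemma hi_ge (S : {set ('I_n * 'I_T)}) o k : o \in S -> xv o k <= hi S k.
Proof. move=> oS; exact: (le_bigmax_cond _ _ oS). Qed.
Lemma lo_ge0 (S : {set ('I_n * 'I_T)}) k : 0 <= lo S k.
Proof. apply: le_bigmin => // o _; by case/andP: (xv01 o k). Qed.
Lemma hi_le1 (S : {set ('I_n * 'I_T)}) k : hi S k <= 1.
Proof. apply: bigmax_le => // o _; by case/andP: (xv01 o k). Qed.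
Lemma lo_att (S : {set ('I_n * 'I_T)}) o k : o \in S -> exists2 o1, o1 \in S & xv o1 k <= lo S k.
Proof.
move=> oS; have := lexx (lo S k); rewrite {2}/lo; move=> /bigmin_leP H; case: H => h1; last by case: h1 => u1 H1 H2; exists u1.
exists o => //; case/andP: (xv01 o k) => _ h2; exact: le_trans h2 h1.
Qed.
Lemma hi_att (S : {set ('I_n * 'I_T)}) o k : o \in S -> exists2 o1, o1 \in S & hi S k <= xv o1 k.
Proof.
move=> oS; have := lexx (hi S k); rewrite {1}/hi; move=> /bigmax_geP H; case: H => h1; last by case: h1 => u1 H1 H2; exists u1.
exists o => //; case/andP: (xv01 o k) => h2 _; exact: le_trans h1 h2.
Qed.
Lemma lo_sub (S S' : {set ('I_n * 'I_T)}) k : S' \subset S -> lo S k <= lo S' k.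
Proof.
move=> sub; apply: le_bigmin; first exact: bigmin_le_id.
move=> o oS'; apply: lo_le; exact: (fintype.subsetP sub _ oS').
Qed.
Lemma hi_sub (S S' : {set ('I_n * 'I_T)}) k : S' \subset S -> hi S' k <= hi S k.
Proof.
move=> sub; apply: bigmax_le; first exact: bigmax_ge_id.
move=> o oS'; apply: hi_ge; exact: (fintype.subsetP sub _ oS').
Qed.
Lemma wd_ge0 (S : {set ('I_n * 'I_T)}) o k : o \in S -> 0 <= wd S k.
Proof. move=> oS; rewrite /wd subr_ge0; exact: le_trans (lo_le k oS) (hi_ge k oS). Qed.
Lemma wd_sub (S S' : {set ('I_n * 'I_T)}) k : S' \subset S -> wd S' k <= wd S k.
Proof. move=> sub; rewrite /wd; apply: lerB; [exact: hi_sub|exact: lo_sub]. Qed.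
Lemma wd_le1 (S : {set ('I_n * 'I_T)}) k : wd S k <= 1.
Proof. rewrite /wd; have := hi_le1 S k; have := lo_ge0 S k; lra. Qed.
Lemma wd_pts (S : {set ('I_n * 'I_T)}) o1 o2 k : o1 \in S -> o2 \in S -> `|xv o1 k - xv o2 k| <= wd S k.
Proof.
move=> h1 h2; have := lo_le k h1; have := lo_le k h2; have := hi_ge k h1; have := hi_ge k h2.
rewrite /wd ler_norml; lra.
Qed.

Lemma wd_split (S A B : {set ('I_n * 'I_T)}) j a b : A \subset S -> B \subset S -> a \in A -> b \in B ->
  (forall a b, a \in A -> b \in B -> xv a j <= xv b j) -> wd A j + wd B j <= wd S j.
Proof.
move=> sA sB aA bB H.
have [a1 a1A ha1] := hi_att j aA.
have [b1 b1B hb1] := lo_att j bB.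
have := H _ _ a1A b1B; have := lo_sub j sA; have := hi_sub j sB.
rewrite /wd; lra.
Qed.

Definition boxset (x1 x2 : 'I_p -> R) := [set o : ('I_n * 'I_T)%type |
                     [forall j, (x1 j <= X o.1 o.2 j) && (X o.1 o.2 j <= x2 j)]].

Lemma box_sup (S : {set ('I_n * 'I_T)}) : S \subset boxset (lo S) (hi S).
Proof.
apply/fintype.subsetP => o oS; rewrite inE; apply/forallP => j; apply/andP; split.
  exact: (lo_le j oS).
exact: (hi_ge j oS).
Qed.

Lemma box_eq (S : {set ('I_n * 'I_T)}) o : bconv S -> o \in S -> boxset (lo S) (hi S) = S.
Proof.
move=> bc oS; apply/eqP; rewrite finset.eqEsubset; apply/andP; split; last exact: box_sup.
apply/fintype.subsetP => o' /[!inE] /forallP H; apply: bc => k; case/andP: (H k) => h1 h2.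
  have [u1 u1S h] := lo_att k oS; exists u1 => //; exact: le_trans h h1.
have [u1 u1S h] := hi_att k oS; exists u1 => //; exact: le_trans h2 h.
Qed.

Lemma bconvT : bconv [set: ('I_n * 'I_T)%type].
Proof. by move=> o _ _; rewrite inE. Qed.

Lemma bconv_left (S : {set ('I_n * 'I_T)}) j x : bconv S -> bconv (left_set X S j x).
Proof.
move=> bc o H1 H2; rewrite inE; apply/andP; split.
  apply: bc => k.
    have [u1 u1S h] := H1 k; exists u1 => //; move: u1S; rewrite inE => /andP[] //.
  have [u1 u1S h] := H2 k; exists u1 => //; move: u1S; rewrite inE => /andP[] //.
have [u1 u1S h] := H2 j; move: u1S; rewrite inE => /andP[_ h'].
exact: le_trans h h'.
Qed.

Lemma bconv_right (S : {set ('I_n * 'I_T)}) j x : bconv S -> bconv (right_set X S j x).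
Proof.
move=> bc o H1 H2; rewrite inE; apply/andP; split.
  apply: bc => k.
    have [u1 u1S h] := H1 k; exists u1 => //; move: u1S; rewrite inE => /andP[] //.
  have [u1 u1S h] := H2 k; exists u1 => //; move: u1S; rewrite inE => /andP[] //.
have [u1 u1S h] := H1 j; move: u1S; rewrite inE => /andP[_ h'].
exact: lt_le_trans h' h.
Qed.


Definition vol (S : {set ('I_n * 'I_T)}) := \prod_(k < p) wd S k.

Lemma vol_split (S : {set ('I_n * 'I_T)}) j : vol S = wd S j * \prod_(k < p | k != j) wd S k.
Proof. by rewrite /vol (bigD1 j). Qed.

Lemma vol_sub (S B : {set ('I_n * 'I_T)}) j o : B \subset S -> o \in B ->
  vol B <= wd B j * \prod_(k < p | k != j) wd S k.
Proof.
move=> sub oB; rewrite /vol (bigD1 j) //=; apply: ler_pM.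
- exact: wd_ge0 oB.
- apply: prodr_ge0 => k _; exact: wd_ge0 oB.
- by [].
apply: ler_prod => k _; apply/andP; split; [exact: wd_ge0 oB|exact: wd_sub].
Qed.

Variables (cund cbar e alpha : R).
Hypothesis Hcov : forall x1 x2 : 'I_p -> R,
  (forall j, 0 <= x1 j) -> (forall j, x1 j <= x2 j) -> (forall j, x2 j <= 1) ->
  cund * (\prod_(j < p) (x2 j - x1 j)) - e <= #|boxset x1 x2|%:R / (n * T)%:R /\
  #|boxset x1 x2|%:R / (n * T)%:R <= cbar * (\prod_(j < p) (x2 j - x1 j)) + e.

Lemma cov_set (S : {set ('I_n * 'I_T)}) o : o \in S ->
  cund * vol S - e <= #|boxset (lo S) (hi S)|%:R / (n * T)%:R /\
  #|boxset (lo S) (hi S)|%:R / (n * T)%:R <= cbar * vol S + e.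
Proof.
move=> oS; apply: Hcov => j; [exact: lo_ge0| |exact: hi_le1].
exact: le_trans (lo_le j oS) (hi_ge j oS).
Qed.

Lemma contract (S B Tg : {set ('I_n * 'I_T)}) j o1 o2 :
  0 < alpha -> alpha <= 1 -> 0 < cund -> 0 < cbar -> (0 < n * T)%N ->
  bconv S -> B \subset S -> Tg \subset S -> o1 \in B -> o2 \in Tg ->
  wd B j + wd Tg j <= wd S j ->
  alpha * #|S|%:R <= #|B|%:R ->
  2 * e <= alpha * (#|S|%:R / (n * T)%:R) ->
  wd Tg j <= (1 - alpha * cund / (4 * cbar)) * wd S j.
Proof.
move=> a0 a1 u0 b0 NT0 bc sB sT oB oT hw hcB he.
have oS : o1 \in S by exact: (fintype.subsetP sB _ oB).
set N := (n * T)%:R : R.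
have N0 : 0 < N by rewrite ltr0n.
set A := #|S|%:R / N.
rewrite -/N -/A in he.
have A0 : 0 < A.
  apply: divr_gt0 => //; rewrite ltr0n; apply/card_gt0P; by exists o1.
set Pp := \prod_(k < p | k != j) wd S k.
have P0 : 0 <= Pp by apply: prodr_ge0 => k _; exact: wd_ge0 oS.
have [h2 _] := cov_set oS.
rewrite (box_eq bc oS) -/A (vol_split S j) -/Pp in h2.
have [_ h1] := cov_set oB.
have hB1 : #|B|%:R <= #|boxset (lo B) (hi B)|%:R :> R by rewrite ler_nat; apply: subset_leq_card; exact: box_sup.
have hB2 : alpha * A <= #|B|%:R / N.
  by rewrite /A mulrA ler_pM2r ?invr_gt0.
have hB3 : #|B|%:R / N <= cbar * (wd B j * Pp) + e.
  apply: (le_trans _ (le_trans h1 _)); first by rewrite ler_pM2r ?invr_gt0.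
  rewrite lerD2r ler_pM2l //; exact: (vol_sub _ sB oB).
have wB0 : 0 <= wd B j by exact: wd_ge0 oB.
have k1 : alpha * A / 2 <= cbar * (wd B j * Pp) by lra.
have k2 : cund * (wd S j * Pp) <= 2 * A.
  have : alpha * A <= A by by rewrite -[leRHS]mul1r ler_pM2r.
  lra.
have Pp0 : 0 < Pp.
  rewrite lt0r P0 andbT; apply/eqP => Pz; move: k1; rewrite Pz !mulr0.
  have : 0 < alpha * A / 2 by apply: divr_gt0 => //; apply: mulr_gt0.
  lra.
have k3 : alpha * cund * wd S j <= 4 * cbar * wd B j.
  rewrite -(ler_pM2r Pp0).
  have : alpha * (cund * (wd S j * Pp)) <= alpha * (2 * A) by rewrite ler_pM2l.
  have e1 : alpha * cund * wd S j * Pp = alpha * (cund * (wd S j * Pp)) by ring.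
  have e2 : 4 * cbar * wd B j * Pp = 4 * (cbar * (wd B j * Pp)) by ring.
  rewrite e1 e2; lra.
have k4 : alpha * cund / (4 * cbar) * wd S j <= wd B j.
  rewrite mulrAC ler_pdivrMr; last by apply: mulr_gt0.
  rewrite (mulrC (wd B j)); lra.
have -> : (1 - alpha * cund / (4 * cbar)) * wd S j = wd S j - alpha * cund / (4 * cbar) * wd S j by ring.
lra.
Qed.

End Geo.

Definition fairP (R : realType) (p : nat) (pi : R) (h : nat) (pth : seq 'I_p) :=
  forall pre x suf, pth = pre ++ x :: suf -> (h <= size pre)%N ->
    pi * p%:R <= (size pre)%:R ->
    (exists k, unused_recent pi (rev pre) k) -> unused_recent pi (rev pre) x.

Lemma ext_take (I : Type) (pre pth : seq I) j h :
  size pre = h -> take h.+1 pth = rcons pre j -> take h pth = pre.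
Proof.
move=> sz ht.
have hs : (h < size pth)%N.
  have := congr1 size ht; rewrite size_take_min size_rcons sz; lia.
have := take_nth j hs; rewrite ht => /rcons_inj [] -> //.
Qed.

Lemma ext_size (I : Type) (pre pth : seq I) j h :
  size pre = h -> take h.+1 pth = rcons pre j -> (h < size pth)%N.
Proof.
move=> sz ht; have := congr1 size ht; rewrite size_take_min size_rcons sz; lia.
Qed.

Lemma ext_nth (I : Type) (pre pth : seq I) j h :
  size pre = h -> take h.+1 pth = rcons pre j -> nth j pth h = j.
Proof.
move=> sz ht; rewrite -(@nth_take h.+1) // ht nth_rcons sz ltnn eqxx //.
Qed.

Lemma ext_fair (R : realType) (p : nat) (pi : R) (pre pth : seq 'I_p) j h :
  size pre = h -> take h.+1 pth = rcons pre j -> fairP pi h.+1 pth ->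
  (pi * p%:R <= (size (rev pre))%:R ->
     (exists k, unused_recent pi (rev pre) k) -> unused_recent pi (rev pre) j) ->
  fairP pi h pth.
Proof.
move=> sz ht fp hj pre' x suf eq hle hpi hex.
have [hlt|heq] : (h < size pre')%N \/ size pre' = h.
  by rewrite ltn_neqAle hle andbT; case: eqP; [right|left].
  exact: (fp pre' x suf).
have tk := ext_take sz ht.
have hp : pre' = pre by rewrite -tk eq take_size_cat.
have hx : x = j.
  have := ext_nth sz ht; rewrite eq nth_cat heq ltnn subnn /= => //.
subst; apply: hj => //; by rewrite size_rev.
Qed.

Section Tree.
Variables (R : realType) (n T p q : nat) (X : 'I_n -> 'I_T -> 'I_p -> R).
Variable (W : 'I_q -> 'I_n -> 'I_T -> bool).
Hypothesis HX : forall z tt j, 0 <= X z tt j <= 1.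
Variables (cund cbar e alpha pi : R) (K0 : nat).
Hypothesis Hcov : forall x1 x2 : 'I_p -> R,
  (forall j, 0 <= x1 j) -> (forall j, x1 j <= x2 j) -> (forall j, x2 j <= 1) ->
  cund * (\prod_(j < p) (x2 j - x1 j)) - e <= #|boxset X x1 x2|%:R / (n * T)%:R /\
  #|boxset X x1 x2|%:R / (n * T)%:R <= cbar * (\prod_(j < p) (x2 j - x1 j)) + e.
Hypotheses (a0 : 0 < alpha) (a1 : alpha <= 1) (u0 : 0 < cund) (ub : cund <= cbar)
  (NT0 : (0 < n * T)%N).
Hypothesis HK : forall h, (h < K0)%N -> 2 * e <= alpha * alpha ^+ h.

Let rho := 1 - alpha * cund / (4 * cbar).
Lemma rho_ge0 : 0 <= rho.
Proof.
rewrite /rho subr_ge0 ler_pdivrMr; last by rewrite mulr_gt0 // (lt_le_trans u0 ub).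
rewrite mul1r; have := lt_le_trans u0 ub => b0.
have : alpha * cund <= 1 * cbar by apply: ler_pM; rewrite // ltW.
lra.
Qed.

Lemma ext_width (S C : {set ('I_n * 'I_T)}) h (pre pth : seq 'I_p) j (lf : {set ('I_n * 'I_T)}) :
  size pre = h -> C \subset S -> take h.+1 pth = rcons pre j ->
  ((h < K0)%N -> wd X C j <= rho * wd X S j) ->
  (forall k, wd X lf k <= wd X C k * rho ^+ (count_mem k (drop h.+1 (take K0 pth)))) ->
  forall k, wd X lf k <= wd X S k * rho ^+ (count_mem k (drop h (take K0 pth))).
Proof.
move=> sz sub ht hc hlf k; apply: (le_trans (hlf k)).
have r0 := rho_ge0.
case: (ltnP h K0) => hK.
  have hs : (h < size (take K0 pth))%N.
    rewrite size_take_min; have := ext_size sz ht; lia.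
  rewrite (drop_nth j hs) nth_take // (ext_nth sz ht) /=.
  case: (eqVneq j k) => [<-|njk].
    rewrite add1n exprS mulrA; apply: ler_wpM2r; first exact: exprn_ge0.
    by rewrite mulrC; apply: hc.
  rewrite add0n; apply: ler_wpM2r; first exact: exprn_ge0.
  exact: wd_sub.
rewrite !drop_oversize ?size_take_min; [|lia|lia].
by rewrite /= expr0 !mulr1; apply: wd_sub.
Qed.


Lemma tree_main (t : tree R p) : forall (S : {set ('I_n * 'I_T)}) h (pre : seq 'I_p),
  size pre = h -> regular X W alpha t S -> fair_split pi t (rev pre) -> bconv X S ->
  alpha ^+ h * (n * T)%:R <= #|S|%:R ->
  forall lf, lf \in leaves X t S h ->
  exists pth : seq 'I_p, [/\ take h pth = pre, size pth = lf.2, fairP pi h pth &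
     forall k, wd X lf.1 k <= wd X S k * rho ^+ (count_mem k (drop h (take K0 pth)))].
Proof.
have b0 : 0 < cbar := lt_le_trans u0 ub.
have N0 : 0 < (n * T)%:R :> R by rewrite ltr0n.
elim: t => [|j x l IHl r IHr] S h pre sz reg fs bc cS lf.
  rewrite /= inE => /eqP -> /=; exists pre; split => //.
  - by rewrite -sz take_size.
  - move=> pre' x suf eq hle; have := congr1 size eq; rewrite size_cat /=; lia.
  - move=> k; rewrite drop_oversize ?size_take_min; last lia.
    by rewrite /= expr0 mulr1.
move: reg => /= [[hl hr _ _] [rl rr]].
move: fs => /= [hf fl fr].
have S0 : 0 < #|S|%:R :> R.
  apply: lt_le_trans cS; apply: mulr_gt0 => //; exact: exprn_gt0.
have cnt (C : {set ('I_n * 'I_T)}) : alpha * #|S|%:R <= #|C|%:R ->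
    alpha ^+ h.+1 * (n * T)%:R <= #|C|%:R.
  move=> hC; apply: le_trans hC; rewrite exprS -mulrA; apply: ler_wpM2l; [exact: ltW|done].
have ne (C : {set ('I_n * 'I_T)}) : alpha * #|S|%:R <= #|C|%:R -> exists o, o \in C.
  move=> hC; apply/card_gt0P; rewrite -(ltr0n R); apply: lt_le_trans hC.
  exact: mulr_gt0.
have hrev : rev (rcons pre j) = j :: rev pre by rewrite rev_rcons.
have szr : size (rcons pre j) = h.+1 by rewrite size_rcons sz.
have he : (h < K0)%N -> 2 * e <= alpha * (#|S|%:R / (n * T)%:R).
  move=> hK; apply: le_trans (HK hK) _; apply: ler_wpM2l; first exact: ltW.
  by rewrite ler_pdivlMr.
have [ol olL] := ne _ hl.
have [or orR] := ne _ hr.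
have sL : left_set X S j x \subset S by apply/fintype.subsetP => o; rewrite inE => /andP[].
have sR : right_set X S j x \subset S by apply/fintype.subsetP => o; rewrite inE => /andP[].
have hw : wd X (left_set X S j x) j + wd X (right_set X S j x) j <= wd X S j.
  apply: (wd_split HX sL sR olL orR) => a b; rewrite !inE => /andP[_ ha] /andP[_ hb].
  rewrite /xv; apply: le_trans ha (ltW hb).
rewrite /= mem_cat => /orP [] hlf.
  have [pth [tk szp fp hk]] := IHl _ _ _ szr rl (eq_ind_r (fun s => fair_split pi l s) fl hrev)
     (bconv_left (j:=j) (x:=x) bc) (cnt _ hl) lf hlf.
  exists pth; split => //.
  - exact: ext_take sz tk.
  - apply: (ext_fair sz tk fp); exact: hf.
  - apply: (ext_width sz sL tk) => // hK.
    rewrite addrC in hw.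
    rewrite /rho; exact: (contract HX Hcov a0 a1 u0 b0 NT0 bc sR sL orR olL hw hr (he hK)).
have [pth [tk szp fp hk]] := IHr _ _ _ szr rr (eq_ind_r (fun s => fair_split pi r s) fr hrev)
   (bconv_right (j:=j) (x:=x) bc) (cnt _ hr) lf hlf.
exists pth; split => //.
- exact: ext_take sz tk.
- apply: (ext_fair sz tk fp); exact: hf.
- apply: (ext_width sz sR tk) => // hK.
  rewrite /rho; exact: (contract HX Hcov a0 a1 u0 b0 NT0 bc sL sR olL orR hw hl (he hK)).
Qed.

End Tree.

Section Comb.
Variables (R : realType) (p : nat) (pi : R) (s : seq 'I_p) (j : 'I_p).
Hypotheses (hp : (1 <= p)%N) (hpi : 1 < pi) (fs : fairP pi 0 s).
Let F := Num.Def.truncn (pi * p%:R).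

Lemma pp0 : 0 <= pi * p%:R.
Proof. apply: mulr_ge0; [exact: le_trans ler01 (ltW hpi)|exact: ler0n]. Qed.
Lemma F_ge_p : (p <= F)%N.
Proof.
rewrite /F truncn_ge_nat; last exact: pp0.
rewrite -[leLHS]mul1r; apply: ler_wpM2r; [exact: ler0n|exact: ltW].
Qed.
Lemma F_gt : pi * p%:R < F.+1%:R.
Proof. exact: truncnS_gt. Qed.
Lemma F_le : (F%:R : R) <= pi * p%:R.
Proof. by rewrite /F truncn_le pp0. Qed.
Lemma leF i : ((i%:R : R) <= pi * p%:R) = (i <= F)%N.
Proof. by rewrite /F truncn_ge_nat //; exact: pp0. Qed.

Lemma fair_at h : (h < size s)%N -> pi * p%:R <= h%:R ->
  (exists k, unused_recent pi (rev (take h s)) k) ->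
  unused_recent pi (rev (take h s)) (nth j s h).
Proof.
move=> hs hpi' hex; apply: (fs (suf := drop h.+1 s)) => //.
- by rewrite -drop_nth // cat_take_drop.
- by rewrite size_take_min; have -> : minn h (size s) = h by lia.
Qed.

Lemma nth_revtake (x0 : 'I_p) h i : (h <= size s)%N -> (i < h)%N ->
  nth x0 (rev (take h s)) i = nth x0 s (h - i.+1).
Proof.
move=> hs hi; have sz : size (take h s) = h by rewrite size_take_min; lia.
rewrite nth_rev sz //; rewrite nth_take //; lia.
Qed.

Lemma run_bound g r : (g + r <= size s)%N ->
  (forall i, (g <= i < g + r)%N -> nth j s i != j) -> (r < F + p + (g == 0%N))%N.
Proof.
move=> hgr hno; rewrite ltnNge; apply/negP => hr.
have Fp := F_ge_p.
set h0 := (g + r - p)%N.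
have h0g : (g + F + (g == 0%N) <= h0)%N by rewrite /h0; lia.
pose f := fun i : 'I_p => nth j s (h0 + i).
have fne : forall i1 i2 : 'I_p, (i1 < i2)%N -> f i1 != f i2.
  move=> i1 i2 lt12.
  have hlt : (h0 + i2 < size s)%N by have := ltn_ord i2; rewrite /h0; lia.
  have hge : pi * p%:R <= (h0 + i2)%:R.
    apply: ltW; apply: lt_le_trans F_gt _; rewrite ler_nat; case: (g =P 0%N) h0g => /= ? ?; lia.
  have un := fair_at hlt hge.
  have : unused_recent pi (rev (take (h0 + i2) s)) (nth j s (h0 + i2)).
    apply: un; exists j => i hi hiF.
    rewrite size_rev size_take_min in hi.
    rewrite nth_revtake; [|lia|lia].
    rewrite leF in hiF.
    apply: hno; have := ltn_ord i2; rewrite /h0 in h0g *; lia.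
  move/(_ (i2 - i1 - 1)%N).
  rewrite size_rev size_take_min leF.
  have := ltn_ord i2; have := ltn_ord i1 => o1 o2.
  have c1 : (i2 - i1 - 1 < minn (h0 + i2) (size s))%N by lia.
  have c2 : ((i2 - i1 - 1).+1 <= F)%N by lia.
  move/(_ c1 c2); rewrite nth_revtake; [|lia|lia].
  have -> : (h0 + i2 - (i2 - i1 - 1).+1 = h0 + i1)%N by lia.
  rewrite /f (set_nth_default j); [by []|lia].
have finj : injective f.
  move=> i1 i2 eqf; apply: val_inj => /=; case: (ltngtP i1 i2) => // hlt.
    by move: (fne _ _ hlt); rewrite eqf eqxx.
  by move: (fne _ _ hlt); rewrite eqf eqxx.
have := inj_card_onto finj (leqnn _) j.
case/codomP => i hi.
have : (g <= h0 + i < g + r)%N by have := ltn_ord i; rewrite /h0 in h0g *; lia.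
by move/hno; rewrite -/(f i) -hi eqxx.
Qed.

Let cnt L := count_mem j (take L s).

Lemma cnt_step q : (q < size s)%N -> cnt q.+1 = (cnt q + (nth j s q == j))%N.
Proof.
move=> hq; rewrite /cnt (take_nth j hq) -cats1 count_cat /=; lia.
Qed.

Lemma cnt_flat a b : (a <= b <= size s)%N ->
  (forall i, (a <= i < b)%N -> nth j s i != j) -> cnt b = cnt a.
Proof.
elim: b => [|b IH] hab hno; first by have -> : a = 0%N by lia.
case: (eqVneq a b.+1) => [-> //|nab].
rewrite cnt_step; last lia.
rewrite IH; [|lia|by move=> i hi; apply: hno; lia].
have := hno b; rewrite (_ : (a <= b < b.+1)%N); last lia.
by move/(_ isT)/negbTE => ->; rewrite addn0.
Qed.

Lemma last_occ L : (forall i, (i < L)%N -> nth j s i != j) \/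
  exists q, [/\ (q < L)%N, nth j s q == j & forall i, (q < i < L)%N -> nth j s i != j].
Proof.
elim: L => [|L [IH|[q [hq hqj hno]]]].
- by left.
- case: (eqVneq (nth j s L) j) => hL.
    right; exists L; split; [lia|by apply/eqP|move=> i hi; lia].
  left => i hi; case: (ltngtP i L) => [hiL|//|->//]; [exact: IH|lia].
- case: (eqVneq (nth j s L) j) => hL.
    right; exists L; split; [lia|by apply/eqP|move=> i hi; lia].
  right; exists q; split => //; first lia.
  move=> i hi; case: (ltngtP i L) => [hiL|?|->//]; [apply: hno; lia|lia].
Qed.

Lemma cnt_bound L : (L <= size s)%N -> (L <= (cnt L + 1) * (F + p))%N.
Proof.
elim/ltn_ind: L => L IH hL.
case: (last_occ L) => [hno|[q [hq hqj hno]]].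
  have := run_bound (g := 0%N) (r := L) hL; rewrite add0n => /(_ hno).
  move=> h; have : (L <= F + p)%N by move: h; rewrite eqxx /=; lia.
  move=> h'; apply: leq_trans h' _; rewrite mulnDl mul1n; lia.
have := run_bound (g := q.+1) (r := (L - q.+1)%N).
rewrite (_ : (q.+1 + (L - q.+1) = L)%N); last lia.
move=> /(_ hL) hr.
have hr' : (L - q.+1 < F + p)%N.
  by move: (hr (fun i hi => hno i hi)); rewrite addn0.
have e1 : cnt L = (cnt q + 1)%N.
  rewrite (@cnt_flat q.+1 L); [|lia|by move=> i hi; apply: hno; lia].
  by rewrite cnt_step ?hqj //; lia.
have := IH q hq (leq_trans (ltnW hq) hL).
rewrite e1; nia.
Qed.

Lemma cnt_final K0 : (minn K0 (size s) <= (count_mem j (take K0 s) + 1) * (F + p))%N.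
Proof.
case: (leqP K0 (size s)) => h.
  exact: cnt_bound h.
rewrite take_oversize ?(ltnW h) //.
have := cnt_bound (leqnn (size s)); by rewrite /cnt take_size.
Qed.

End Comb.

Lemma beta_facts (R : realType) (alpha cund cbar : R) :
  0 < alpha -> alpha < 1 / 2 -> 0 < cund -> cund <= cbar ->
  0 <= alpha * cund / (4 * cbar) <= 1 / 8.
Proof.
move=> a0 a1 u0 ub.
have b0 : 0 < cbar by lra.
apply/andP; split; first by apply: divr_ge0; [apply: mulr_ge0; lra|lra].
rewrite ler_pdivrMr; last lra.
have h1 : alpha * cund <= alpha * cbar by rewrite ler_pM2l.
have h2 : alpha * cbar <= 1 / 2 * cbar by rewrite ler_pM2r //; lra.
lra.
Qed.

Lemma expR_small (R : realType) (beta : R) : 0 <= beta <= 1 / 8 -> expR beta <= 2.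
Proof.
case/andP => b0 b8.
have Epos := expR_gt0 beta.
have h1 := expR_ge1Dx (- beta).
rewrite expRN in h1.
have h2 := ler_wpM2r (ltW Epos) h1.
rewrite mulVf ?gt_eqF // mulrDl mul1r mulNr in h2.
have h3 : beta * expR beta <= 1 / 8 * expR beta by rewrite ler_pM2r.
lra.
Qed.

Lemma rho_bound (R : realType) (beta sl D0 P : R) (m : nat) :
  0 <= beta <= 1 / 8 -> 0 < P -> D0 <= (m.+1)%:R * P -> sl = beta * (D0 / P) ->
  (1 - beta) ^+ m <= 2 * expR (- sl).
Proof.
move=> /andP [b0 b8] P0 hD esl.
have hr : 1 - beta <= expR (- beta) by have := expR_ge1Dx (- beta); lra.
have r0 : 0 <= 1 - beta by lra.
apply: (le_trans (lerXn2r m _ _ hr)); [by rewrite nnegrE|by rewrite nnegrE ltW ?expR_gt0|].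
rewrite -expRM_natl.
have hsl : sl <= beta * (m.+1)%:R.
  rewrite esl; apply: ler_wpM2l => //; rewrite ler_pdivrMr //.
have -> : m%:R * - beta = beta + - (beta * (m.+1)%:R).
  by rewrite -addn1 natrD; ring.
rewrite expRD; apply: ler_pM.
- exact: ltW (expR_gt0 _).
- exact: ltW (expR_gt0 _).
- apply: expR_small; exact/andP.
- by rewrite ler_expR lerN2.
Qed.

Lemma euclid (R : realType) (p : nat) (x y : 'I_p -> R) (d : R) :
  0 <= d -> (forall k, `|x k - y k| <= d) ->
  Num.sqrt (\sum_(j < p) (x j - y j) ^+ 2) <= Num.sqrt p%:R * d.
Proof.
move=> d0 H.
have hsum : \sum_(j < p) (x j - y j) ^+ 2 <= p%:R * d ^+ 2.
  rewrite -[p in p%:R](card_ord p) mulr_natl -sumr_const.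
  apply: ler_sum => j _.
  rewrite -real_normK ?num_real //; apply: lerXn2r; rewrite ?nnegrE //.
apply: (le_trans (ler_wsqrtr hsum)).
by rewrite sqrtrM ?ler0n // sqrtr_sqr ger0_norm.
Qed.

Lemma lip_nonneg (R : realType) (p : nat) (f : ('I_p -> R) -> R) (Li : R) :
  (0 < p)%N ->
  (forall (x y : 'I_p -> R), (forall j, 0 <= x j <= 1) -> (forall j, 0 <= y j <= 1) ->
      `|f x - f y| <= Li * Num.sqrt (\sum_(j < p) (x j - y j) ^+ 2)) -> 0 <= Li.
Proof.
move=> p0 HL.
have := HL (fun _ => 0) (fun _ => 1).
have h01 : forall j : 'I_p, 0 <= (fun _ : 'I_p => 0 : R) j <= 1 by move=> ?; rewrite lexx ler01.
have h11 : forall j : 'I_p, 0 <= (fun _ : 'I_p => 1 : R) j <= 1 by move=> ?; rewrite lexx ler01.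
move=> /(_ h01 h11).
rewrite sumr_const card_ord sub0r sqrrN expr1n.
have sp : 0 < Num.sqrt (1 *+ p) :> R by rewrite sqrtr_gt0 pmulrn_lgt0.
move=> h; have := le_trans (normr_ge0 _) h.
by rewrite pmulr_lge0.
Qed.

Lemma depth_bound (R : realType) (pi D0 : R) (p m d : nat) :
  1 < pi -> 0 <= D0 -> D0 <= d%:R ->
  (minn (Num.Def.truncn D0).+1 d <= (m + 1) * (Num.Def.truncn (pi * p%:R) + p))%N ->
  D0 <= (m.+1)%:R * ((pi + 1) * p%:R).
Proof.
move=> pi1 D00 hd cf.
have hK0 : D0 <= ((Num.Def.truncn D0).+1)%:R by apply: ltW; exact: truncnS_gt.
have hmin : D0 <= (minn (Num.Def.truncn D0).+1 d)%:R.
  by case: (leqP (Num.Def.truncn D0).+1 d).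
apply: (le_trans hmin); apply: (le_trans (_ : _ <= ((m + 1) * (Num.Def.truncn (pi * p%:R) + p))%:R)).
  by rewrite ler_nat.
have -> : ((m + 1) * (Num.Def.truncn (pi * p%:R) + p))%:R
    = (m.+1)%:R * ((Num.Def.truncn (pi * p%:R))%:R + p%:R) :> R by rewrite addn1 natrM natrD.
apply: ler_wpM2l; first exact: ler0n.
have pp : 0 <= pi * p%:R by apply: mulr_ge0; [lra|exact: ler0n].
have := truncn_le (pi * p%:R); rewrite pp => hF.
lra.
Qed.

Lemma leaves_size (R : realType) n T p (X : 'I_n -> 'I_T -> 'I_p -> R) (t : tree R p) :
  forall S d, (0 < size (leaves X t S d))%N.
Proof. elim: t => [|j x l IHl r IHr] S d //=; rewrite size_cat; have := IHl (left_set X S j x) d.+1; lia. Qed.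

Unset Implicit Arguments. Set Strict Implicit.

Theorem theorem1 (R : realType) (n T p q : nat)
  (X : 'I_n -> 'I_T -> 'I_p -> R) (W : 'I_q -> 'I_n -> 'I_T -> bool)
  (alpha pi c cbar cund cm : R)
  (t : tree R p)
  (Tstar : 'I_q -> ('I_p -> R) -> R) (L : 'I_q -> R) :
  (1 <= n)%N -> (1 <= T)%N -> (1 <= p)%N ->
  0 < alpha -> alpha < 1 / 2 -> 1 < pi -> 0 < c ->
  0 < cund -> cund <= cbar -> 0 < cm ->
  (forall z tt j, 0 <= X z tt j <= 1) ->
  (let M := Num.sqrt (ln (n * T)%:R * (p.+1)%:R / (minn n T)%:R) in
   forall x1 x2 : 'I_p -> R,
     (forall j, 0 <= x1 j) -> (forall j, x1 j <= x2 j) -> (forall j, x2 j <= 1) ->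
     let V := \prod_(j < p) (x2 j - x1 j) in
     let frac := #|[set o : ('I_n * 'I_T)%type |
                     [forall j, (x1 j <= X o.1 o.2 j) && (X o.1 o.2 j <= x2 j)]]|%:R
                 / (n * T)%:R in
     cund * V - cm * M <= frac /\ frac <= cbar * V + cm * M) ->
  regular X W alpha t [set: ('I_n * 'I_T)%type] ->
  fair_split pi t [::] ->
  (let lvs := leaves X t [set: ('I_n * 'I_T)%type] 0 in
   let ell := (size lvs)%:R : R in
   let M := Num.sqrt (ln (n * T)%:R * (p.+1)%:R / (minn n T)%:R) in
   (forall lf, lf \in lvs -> c * ln ell <= (lf.2)%:R) ->
   ell `^ (c * ln (1 / alpha)) * (2 * cm * M) <= alpha ->
   (forall i (x y : 'I_p -> R),
      (forall j, 0 <= x j <= 1) -> (forall j, 0 <= y j <= 1) ->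
      `|Tstar i x - Tstar i y| <= L i * Num.sqrt (\sum_(j < p) (x j - y j) ^+ 2)) ->
   let s := c / ((pi + 1) * p%:R) * (alpha * cund / (4 * cbar)) in
   forall i lf, lf \in lvs ->
     forall o1 o2, o1 \in lf.1 -> o2 \in lf.1 ->
       `|Tstar i (X o1.1 o1.2) - Tstar i (X o2.1 o2.2)|
         <= 2 * L i * Num.sqrt p%:R / ell `^ s).
Proof.
move=> n1 T1 p1 a0 a12 pi1 c0 u0 ub cm0 HX Hcov reg fs lvs ell M Hdepth Hell HL s i lf lfin o1 o2 o1in o2in.

set e := cm * M.
have Hcov' : forall x1 x2 : 'I_p -> R,
  (forall j, 0 <= x1 j) -> (forall j, x1 j <= x2 j) -> (forall j, x2 j <= 1) ->
  cund * (\prod_(j < p) (x2 j - x1 j)) - e <= #|boxset X x1 x2|%:R / (n * T)%:R /\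
  #|boxset X x1 x2|%:R / (n * T)%:R <= cbar * (\prod_(j < p) (x2 j - x1 j)) + e.
  move=> x1 x2 h1 h2 h3; exact: (Hcov x1 x2 h1 h2 h3).
have a1 : alpha <= 1 by lra.
have NT0 : (0 < n * T)%N by rewrite muln_gt0 n1 T1.
have ell1 : 1 <= ell by rewrite /ell ler1n; exact: leaves_size.
have ell0 : 0 < ell by lra.
set D0 := c * ln ell.
have D00 : 0 <= D0 by apply: mulr_ge0; [lra|exact: ln_ge0].
set K0 := (Num.Def.truncn D0).+1.
have lna : ln alpha < 0 by apply: ln_lt0; apply/andP; split; lra.
have HK : forall h, (h < K0)%N -> 2 * e <= alpha * alpha ^+ h.
  move=> h hK.
  have hD : (h%:R : R) <= D0.
    apply: le_trans (_ : (Num.Def.truncn D0)%:R <= D0); last by rewrite truncn_le.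
    by rewrite ler_nat -ltnS.
  have ah : alpha ^+ h = expR (h%:R * ln alpha) by rewrite expRM_natl lnK // posrE.
  have Epos : 0 < expR (D0 * ln alpha) := expR_gt0 _.
  have E1 : expR (D0 * ln alpha) <= alpha ^+ h.
    rewrite ah ler_expR; apply: ler_wnM2r; lra.
  have Hell' : (expR (D0 * ln alpha))^-1 * (2 * e) <= alpha.
    move: Hell; rewrite /powR gt_eqF //.
    have -> : c * ln (1 / alpha) * ln ell = - (D0 * ln alpha).
      by rewrite /D0 div1r lnV; [ring|rewrite posrE].
    move=> H; apply: (le_trans _ H); by rewrite /e expRN !mulrA.
  have : 2 * e <= alpha * expR (D0 * ln alpha).
    have H3 := ler_wpM2l (ltW Epos) Hell'; rewrite mulrA mulfV ?gt_eqF // mul1r in H3; by rewrite [alpha * _]mulrC.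
  move=> h2; apply: le_trans h2 _; apply: ler_wpM2l; lra.
have cT : alpha ^+ 0 * (n * T)%:R <= #|[set: ('I_n * 'I_T)%type]|%:R.
  by rewrite expr0 mul1r cardsT card_prod !card_ord.
have [pth [_ szp fp hk]] := tree_main HX Hcov' a0 a1 u0 ub NT0 HK (erefl : size (@nil 'I_p) = 0%N) reg fs
  (bconvT (X:=X)) cT lfin.
have bf := beta_facts a0 a12 u0 ub.
have Lpos := lip_nonneg p1 (HL i).
have pos_s : 0 < ell `^ s by rewrite powR_gt0.
have ells : ell `^ s = expR (s * ln ell) by rewrite /powR gt_eqF.
have d0 : 0 <= 2 / ell `^ s by apply: divr_ge0; [exact: ler0n|exact: ltW].
have PP : 0 < (pi + 1) * p%:R by apply: mulr_gt0; [lra|rewrite ltr0n].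
have esl : s * ln ell = alpha * cund / (4 * cbar) * (D0 / ((pi + 1) * p%:R)).
  by rewrite /s /D0; ring.
have key : forall k, `|X o1.1 o1.2 k - X o2.1 o2.2 k| <= 2 / ell `^ s.
  move=> k.
  have h1 := wd_pts X k o1in o2in.
  have h2 := hk k; rewrite drop0 in h2.
  apply: (le_trans h1); apply: (le_trans h2).
  have hD := depth_bound pi1 D00 (_ : D0 <= (size pth)%:R) (cnt_final k p1 pi1 fp K0).
  have rb := rho_bound bf PP (hD (ltac:(rewrite szp; exact: Hdepth))) esl.
  apply: le_trans (ler_piMl (exprn_ge0 _ _) (wd_le1 HX _ k)) _.
    by move: bf => /andP [_ b8]; rewrite subr_ge0; apply: le_trans b8 _; rewrite ler_pdivrMr // mul1r ler1n.
  by rewrite ells -expRN.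
have HL1 := HL i (X o1.1 o1.2) (X o2.1 o2.2) (HX o1.1 o1.2) (HX o2.1 o2.2).
apply: (le_trans HL1).
apply: (le_trans (ler_wpM2l Lpos (euclid d0 key))).
have -> : L i * (Num.sqrt p%:R * (2 / ell `^ s)) = 2 * L i * Num.sqrt p%:R / ell `^ s by ring.
by [].
Qed.
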